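(* Let $f\in Lip_d(I)$ and let $f^\alpha_b$ be the non-stationary $\alpha$-fractal function of $f$ with respect to the partition $\Delta$, the scaling functions $\alpha_{i,r}$ and the base functions $b_r=L_r f$ (setting described in the context). Then for every $j\in\mathbb{N}$, $$\|f^\alpha_b-L_j(f)\|_\infty\le\frac{1}{1-\|\alpha\|_\infty}\sup_{r\in\mathbb{N}}\|f-L_r(f)\|_\infty .$$
   Context: Setting: $I=[x_0,x_N]$ with partition $\Delta: x_0<x_1<\dots<x_N$, $I_i=[x_{i-1},x_i]$, $l_i:I\to I_i$ the increasing affine bijection $l_i(x)=\frac{x_i-x_{i-1}}{x_N-x_0}x+\frac{x_Nx_{i-1}-x_0x_i}{x_N-x_0}$, and $Q_i=l_i^{-1}$. Scaling functions $\alpha_{i,r}:I\to\mathbb{R}$ ($i=1,\dots,N$, $r\in\mathbb{N}$) are continuous with $\|\alpha\|_\infty:=\sup_{r}\max_i\|\alpha_{i,r}\|_\infty<1$. $Lip_d(I)$ ($0<d\le1$) is the space of real functions $g$ on $I$ with $\sup_{x\ne y}|g(x)-g(y)|/|x-y|^d<\infty$, regarded as a subset of $C(I)$ with the supremum norm. $L_r:Lip_d(I)\to Lip_d(I)$ ($r\in\mathbb{N}$) are operators (not necessarily linear) with $(L_rg)(x_0)=g(x_0)$, $(L_rg)(x_N)=g(x_N)$ for all $g$, and $\sup_r\|L_r\|_\infty<\infty$, where $\|L_r\|_\infty=\sup_{g\ne0}\|L_rg\|_\infty/\|g\|_\infty$. Non-stationary $\alpha$-fractal function: for $f\in C(I)$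 and base functions $b_r\in C(I)$ with $b_r(x_0)=f(x_0)$, $b_r(x_N)=f(x_N)$, $\sup_r\|b_r\|_\infty<\infty$, let $C_f(I)=\{g\in C(I):g(x_0)=f(x_0),g(x_N)=f(x_N)\}$ and $T^{\alpha_r}:C_f(I)\to C_f(I)$, $(T^{\alpha_r}g)(x)=f(x)+\alpha_{i,r}(Q_i(x))(g-b_r)(Q_i(x))$ for $x\in I_i$. For every $g\in C_f(I)$, $T^{\alpha_1}\circ\cdots\circ T^{\alpha_r}g$ converges uniformly as $r\to\infty$ to a function independent of $g$; this limit is the non-stationary $\alpha$-fractal function. Here $f^\alpha_b$ denotes it for the choice $b_r=L_rf$. *)

(* Defs.v *)
From HB Require Import structures.
From mathcomp Require Import all_boot all_order all_algebra.
From mathcomp Require Import all_classical all_reals all_analysis.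
Set Implicit Arguments. Unset Strict Implicit. Unset Printing Implicit Defensive.
Import Order.TTheory GRing.Theory Num.Theory.
Import numFieldNormedType.Exports.
Local Open Scope classical_set_scope.
Local Open Scope ring_scope.

Section NSFractal.
Variable R : realType.

Definition Icc (a b : R) : set R := [set t | a <= t <= b].

Definition supnorm (a b : R) (g : R -> R) : R := sup [set `|g t| | t in Icc a b].

Definition LipD (d a b : R) (g : R -> R) : Prop :=
  exists C : R, forall s t, s \in Icc a b -> t \in Icc a b -> s != t ->
    `|g s - g t| / (`|s - t| `^ d) <= C.

(* affine maps l_i and Q_i = l_i^{-1} for the partition x_0 < ... < x_N *)
Definition laff (x : nat -> R) (N i : nat) (t : R) : R :=
  (x i - x i.-1) / (x N - x 0%N) * t + (x N * x i.-1 - x 0%N * x i) / (x N - x 0%N).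
Definition Qaff (x : nat -> R) (N i : nat) (t : R) : R :=
  ((x N - x 0%N) * t - (x N * x i.-1 - x 0%N * x i)) / (x i - x i.-1).

(* index i in {1..N} with t in I_i = [x_{i-1}, x_i] (first one at breakpoints) *)
Definition seg (x : nat -> R) (N : nat) (t : R) : nat :=
  (\sum_(1 <= k < N) nat_of_bool (x k < t)%R)%N.+1.

Definition Top (x : nat -> R) (N : nat) (alpha : nat -> nat -> R -> R)
  (f : R -> R) (b : nat -> R -> R) (r : nat) (g : R -> R) : R -> R :=
  fun t => let i := seg x N t in
    f t + alpha i r (Qaff x N i t) * (g (Qaff x N i t) - b r (Qaff x N i t)).

(* T^{alpha_1} o ... o T^{alpha_r} g *)
Definition Tcomp (x : nat -> R) (N : nat) (alpha : nat -> nat -> R -> R)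
  (f : R -> R) (b : nat -> R -> R) (r : nat) (g : R -> R) : R -> R :=
  foldr (fun k h => Top x N alpha f b k h) g (iota 1 r).

Definition alpha_set (x : nat -> R) (N : nat) (alpha : nat -> nat -> R -> R) : set R :=
  [set y | exists i r, (1 <= i <= N)%N /\ (0 < r)%N /\ y = supnorm (x 0%N) (x N) (alpha i r)].

End NSFractal.

(* Main.v *)
Require Import Defs.
From HB Require Import structures.
From mathcomp Require Import all_boot all_order all_algebra.
From mathcomp Require Import all_classical all_reals all_analysis.
From mathcomp Require Import zify ring lra.
Import Order.TTheory GRing.Theory Num.Theory.
Import numFieldNormedType.Exports.
Local Open Scope classical_set_scope.
Local Open Scope ring_scope.
Set Implicit Arguments. Unset Strict Implicit.

Lemma supnorm_ub (R : realType) (a b : R) g s :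
  has_ubound [set `|g t| | t in Icc a b] -> Icc a b s -> `|g s| <= supnorm a b g.
Proof. by move=> hu hs; apply: ub_le_sup => //; exists s. Qed.

Lemma supnorm_le (R : realType) (a b : R) g B : a <= b ->
  (forall t, Icc a b t -> `|g t| <= B) -> supnorm a b g <= B.
Proof.
move=> ab hB; apply: ge_sup.
  by exists `|g a|, a => //; rewrite /Icc /= lexx ab.
by move=> y [t ht <-]; apply: hB.
Qed.

Lemma supnorm_ge0 (R : realType) (a b : R) g : a <= b -> 0 <= supnorm a b g.
Proof.
move=> ab; have ha : Icc a b a by rewrite /Icc /= lexx ab.
case: (pselect (@has_ubound _ R [set `|g t| | t in Icc a b])) => hu.
  have := supnorm_ub hu ha; exact: le_trans.
rewrite /supnorm sup_out //; by case.
Qed.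

Lemma Icc_itv (R : realType) (a b : R) : Icc a b = `[a, b]%classic.
Proof. by apply/seteqP; split=> t; rewrite /Icc /= in_itv /=. Qed.

Lemma cont_bounded (R : realType) (a b : R) (h : R -> R) : a <= b ->
  {within Icc a b, continuous h} -> exists B, forall t, Icc a b t -> `|h t| <= B.
Proof.
move=> ab; rewrite Icc_itv => hc.
have [c1 _ h1] := EVT_max ab hc.
have [c2 _ h2] := EVT_min ab hc.
exists (Num.max `|h c1| `|h c2|) => t ht.
have ht' : t \in `[a, b] by exact: ht.
have := h1 _ ht'; have := h2 _ ht'.
rewrite le_max; case: (lerP 0 (h t)) => h0 u v.
  by rewrite ger0_norm // (le_trans v) ?ler_norm.
rewrite ltr0_norm //; apply/orP; right; rewrite -normrN.
by apply: le_trans (ler_norm _); rewrite lerN2.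
Qed.

Lemma lip_bounded (R : realType) (d a b : R) g : 0 < d -> a <= b ->
  LipD d a b g -> exists B, forall t, Icc a b t -> `|g t| <= B.
Proof.
move=> d0 ab [C hC].
exists (`|g a| + `|C| * (b - a) `^ d) => t ht.
have ha : Icc a b a by rewrite /Icc /= lexx ab.
have [-> | ta] := eqVneq t a.
  by rewrite lerDl mulr_ge0 ?powR_ge0.
have : `|g t - g a| <= `|C| * (b - a) `^ d.
  have p0 : 0 < `|t - a| `^ d by rewrite powR_gt0 // normr_gt0 subr_eq0.
  have := hC t a (mem_set ht) (mem_set ha) ta.
  rewrite ler_pdivrMr // => h; apply: (le_trans h).
  apply: ler_pM; rewrite ?powR_ge0 ?ler_norm //.
  - by rewrite -(pmulr_lge0 _ p0); exact: le_trans (normr_ge0 _) h.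
  apply: (ge0_ler_powR (ltW d0)); rewrite ?nnegrE ?subr_ge0 //.
  by move: ht; rewrite /Icc /= => /andP[h1 h2]; rewrite ger0_norm ?subr_ge0 // lerB.
move=> h; have := ler_normD (g t - g a) (g a).
by rewrite subrK => /le_trans; apply; rewrite addrC lerD2l.
Qed.

Section Geo.
Variables (R : realType) (N : nat) (x : nat -> R).
Hypothesis xinc : forall k, (k < N)%N -> x k < x k.+1.

Lemma xlt m n : (m < n)%N -> (n <= N)%N -> x m < x n.
Proof.
elim: n => // n IH; rewrite ltnS leq_eqVlt => /orP[/eqP -> |mn] nN.
  exact: xinc.
by apply: lt_trans (IH mn (ltnW nN)) (xinc nN).
Qed.

Lemma xle m n : (m <= n)%N -> (n <= N)%N -> x m <= x n.
Proof.
rewrite leq_eqVlt => /orP[/eqP -> //|mn] nN; exact/ltW/xlt.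
Qed.

Let cnt (t : R) := (\sum_(1 <= k < N) nat_of_bool (x k < t)%R)%N.

Lemma cnt_le t : (cnt t <= N.-1)%N.
Proof.
rewrite /cnt; apply: (@leq_trans (\sum_(1 <= k < N) 1)%N).
  by apply: leq_sum => k _; case: (x k < t).
by rewrite sum_nat_const_nat muln1 subn1.
Qed.

Lemma seg_range t : (0 < N)%N -> (1 <= seg x N t <= N)%N.
Proof. move=> N0; have := cnt_le t; rewrite /seg -/(cnt t); lia. Qed.

Lemma seg_lo t : x 0%N <= t -> x (seg x N t).-1 <= t.
Proof.
rewrite /seg -/(cnt t) /= => x0t.
have cN := cnt_le t.
case c0 : (cnt t) => [|c] //.
rewrite -c0; case: (lerP (x (cnt t)) t) => // tc; exfalso.
have : (cnt t <= c)%N; last by rewrite c0 ltnn.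
rewrite {1}/cnt (@big_cat_nat _ _ _ (cnt t)) /=; [|lia|lia].
rewrite [X in (_ + X)%N]big_nat_cond [X in (_ + X)%N]big1 ?addn0; last first.
  move=> k /andP[/andP[ck kN] _].
  have : x (cnt t) <= x k by apply: xle => //; lia.
  by move=> h; rewrite ltNge (ltW (lt_le_trans tc h)).
apply: (@leq_trans (\sum_(1 <= k < cnt t) 1)%N).
  by apply: leq_sum => k _; case: (x k < t).
by rewrite sum_nat_const_nat muln1 c0 subn1.
Qed.

Lemma seg_hi t : (0 < N)%N -> t <= x N -> t <= x (seg x N t).
Proof.
rewrite /seg -/(cnt t) => N0 tN.
have cN := cnt_le t.
case: (ltnP (cnt t).+1 N) => cN'; last first.
  by have -> : (cnt t).+1 = N by lia.
case: (lerP t (x (cnt t).+1)) => // ct; exfalso.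
have : ((cnt t).+1 <= cnt t)%N; last by rewrite ltnn.
rewrite {2}/cnt (@big_cat_nat _ _ _ (cnt t).+2) /=; [|lia|lia].
apply: leq_trans (leq_addr _ _).
rewrite -{1}[(cnt t).+1](@subn1 (cnt t).+2) -[(_ - 1)%N]muln1 -sum_nat_const_nat.
rewrite big_nat_cond [X in (_ <= X)%N]big_nat_cond; apply/eq_leq/eq_bigr.
move=> k /andP[/andP[k1 kc] _].
have : x k <= x (cnt t).+1 by apply: xle => //; lia.
by move=> h; rewrite (le_lt_trans h ct).
Qed.

End Geo.

Lemma Q_in (R : realType) (N : nat) (x : nat -> R) i t :
  (forall k, (k < N)%N -> x k < x k.+1) -> (1 <= i <= N)%N ->
  x i.-1 <= t -> t <= x i -> Icc (x 0%N) (x N) (Qaff x N i t).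
Proof.
move=> xinc /andP[i1 iN] lo hi.
have d0 : 0 < x i - x i.-1 by rewrite subr_gt0 (xlt xinc) //; lia.
have D0 : 0 <= x N - x 0%N by rewrite subr_ge0 (xle xinc).
rewrite /Icc /=; apply/andP; split.
  have -> : Qaff x N i t = x 0%N + (x N - x 0%N) * (t - x i.-1) / (x i - x i.-1).
    by rewrite /Qaff; field; rewrite gt_eqF.
  by rewrite lerDl divr_ge0 // ?(ltW d0) // mulr_ge0 // subr_ge0.
have -> : Qaff x N i t = x N - (x N - x 0%N) * (x i - t) / (x i - x i.-1).
  by rewrite /Qaff; field; rewrite gt_eqF.
by rewrite gerDl oppr_le0 divr_ge0 // ?(ltW d0) // mulr_ge0 // subr_ge0.
Qed.

Theorem mainTheorem2 (R : realType) (N : nat) (x : nat -> R) (d : R)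
  (alpha : nat -> nat -> R -> R) (L : nat -> (R -> R) -> (R -> R))
  (f fa : R -> R) :
  (0 < N)%N ->
  (forall k, (k < N)%N -> x k < x k.+1) ->
  0 < d -> d <= 1 ->
  (* scaling functions *)
  (forall i r, (1 <= i <= N)%N -> (0 < r)%N ->
     {within Icc (x 0%N) (x N), continuous (alpha i r : R -> R)}) ->
  has_ubound (alpha_set x N alpha) ->
  sup (alpha_set x N alpha) < 1 ->
  (* operators L_r : Lip_d(I) -> Lip_d(I) *)
  (forall r g, (0 < r)%N -> LipD d (x 0%N) (x N) g -> LipD d (x 0%N) (x N) (L r g)) ->
  (forall r g, (0 < r)%N -> LipD d (x 0%N) (x N) g ->
     L r g (x 0%N) = g (x 0%N) /\ L r g (x N) = g (x N)) ->
  (exists M : R, forall r g, (0 < r)%N -> LipD d (x 0%N) (x N) g ->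
     supnorm (x 0%N) (x N) g != 0 ->
     supnorm (x 0%N) (x N) (L r g) / supnorm (x 0%N) (x N) g <= M) ->
  (* f in Lip_d(I) *)
  LipD d (x 0%N) (x N) f ->
  (* fa = f^alpha_b with b_r = L_r f : uniform limit of T^{alpha_1} o ... o T^{alpha_r} g
     for every g in C_f(I) *)
  (forall g, {within Icc (x 0%N) (x N), continuous (g : R -> R)} ->
     g (x 0%N) = f (x 0%N) -> g (x N) = f (x N) ->
     forall e, 0 < e -> exists r0 : nat, forall r, (r0 <= r)%N -> forall t,
       t \in Icc (x 0%N) (x N) ->
       `|Tcomp x N alpha f (fun r => L r f) r g t - fa t| < e) ->
  forall j, (0 < j)%N ->
    (* if sup_r ||f - L_r f|| = +oo the inequality is trivial *)
    has_ubound [set y | exists r, (0 < r)%N /\ y = supnorm (x 0%N) (x N) (f \- L r f)] ->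
    supnorm (x 0%N) (x N) (fa \- L j f) <=
      (1 - sup (alpha_set x N alpha))^-1 *
      sup [set y | exists r, (0 < r)%N /\ y = supnorm (x 0%N) (x N) (f \- L r f)].
Proof.
move=> N0 xinc d0 d1 acont aub alt1 Llip Lend Lbd flip Hfa j j0 Sub.
set a := sup (alpha_set x N alpha).
set S := sup _.
have x0N : x 0%N <= x N by apply: (xle xinc).
have h0 : Icc (x 0%N) (x N) (x 0%N) by rewrite /Icc /= lexx x0N.
have halpha : forall i r t, (1 <= i <= N)%N -> (0 < r)%N -> Icc (x 0%N) (x N) t ->
    `|alpha i r t| <= a.
  move=> i r t hi hr ht.
  have [B hB] := cont_bounded x0N (acont i r hi hr).
  have hu : has_ubound [set `|alpha i r t| | t in Icc (x 0%N) (x N)].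
    by exists B => y [s hs <-]; apply: hB.
  apply: le_trans (supnorm_ub hu ht) _; apply: (ub_le_sup aub).
  by exists i, r; split => //; split.
have a0 : 0 <= a by apply: le_trans (halpha 1%N 1%N (x 0%N) _ _ h0); rewrite ?N0.
have [Bf hBf] := lip_bounded d0 x0N flip.
have hS : forall r t, (0 < r)%N -> Icc (x 0%N) (x N) t -> `|f t - L r f t| <= S.
  move=> r t hr ht.
  have [BL hBL] := lip_bounded d0 x0N (Llip r f hr flip).
  have hu : has_ubound [set `|(f \- L r f) t| | t in Icc (x 0%N) (x N)].
    exists (Bf + BL) => y [s hs <-]; apply: le_trans (ler_normB _ _) _.
    by apply: lerD; [apply: hBf | apply: hBL].
  apply: le_trans (supnorm_ub hu ht) _; apply: (ub_le_sup Sub).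
  by exists r.
have S0 : 0 <= S by apply: le_trans (hS 1%N _ isT h0).
have a1 : 1 - a != 0 by rewrite subr_eq0 eq_sym lt_eqF.
pose B := a * S / (1 - a).
have B0 : 0 <= B by rewrite divr_ge0 ?mulr_ge0 // subr_ge0 ltW.
pose g t := f (x 0%N) + (t - x 0%N) * ((f (x N) - f (x 0%N)) / (x N - x 0%N)).
have gc : {within Icc (x 0%N) (x N), continuous g}.
  apply: continuous_subspaceT => t.
  apply: cvgD; first exact: cvg_cst.
  apply: cvgMl; apply: cvgB; [exact: cvg_id | exact: cvg_cst].
have gx0 : g (x 0%N) = f (x 0%N) by rewrite /g subrr mul0r addr0.
have x0N' : x 0%N < x N by apply: (xlt xinc).
have gxN : g (x N) = f (x N).
  by rewrite /g mulrC divfK ?subrKC // subr_eq0 gt_eqF.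
have [Bg hBg] := cont_bounded x0N gc.
pose D := Bg + Bf.
have hD : forall t, Icc (x 0%N) (x N) t -> `|g t - f t| <= D.
  move=> t ht; apply: le_trans (ler_normB _ _) _.
  by apply: lerD; [apply: hBg | apply: hBf].
have D0 : 0 <= D by apply: le_trans (hD _ h0).
have hQ : forall t, Icc (x 0%N) (x N) t ->
    Icc (x 0%N) (x N) (Qaff x N (seg x N t) t) /\ (1 <= seg x N t <= N)%N.
  move=> t ht; move: (ht); rewrite /Icc /= => /andP[lo hi].
  split; last exact: seg_range.
  apply: Q_in => //; first exact: seg_range.
    exact: seg_lo.
  exact: seg_hi.
have key : forall n m, (0 < m)%N -> forall t, Icc (x 0%N) (x N) t ->
    `|foldr (fun k h => Top x N alpha f (fun r => L r f) k h) g (iota m n) t - f t|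
      <= B + a ^+ n * D.
  elim=> [|n IH] m m0 t ht.
    by rewrite /= expr0 mul1r (le_trans (hD _ ht)) // lerDr.
  rewrite /= /Top /=.
  set h := foldr _ _ _.
  have [hq hs] := hQ t ht.
  set q := Qaff x N (seg x N t) t.
  rewrite addrC addKr normrM.
  have -> : h q - L m f q = (h q - f q) + (f q - L m f q) by rewrite addrA subrK.
  apply: le_trans (_ : a * ((B + a ^+ n * D) + S) <= _).
    apply: ler_pM; rewrite ?normr_ge0 ?halpha //.
    apply: le_trans (ler_normD _ _) _.
    by apply: lerD; [apply: IH | apply: hS].
  rewrite le_eqVlt; apply/orP; left; apply/eqP.
  by rewrite /B exprS; field.
have hfa : forall t, Icc (x 0%N) (x N) t -> `|fa t - f t| <= B.
  move=> t ht; apply/ler_addgt0Pr => e e0.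
  have e20 : 0 < e / 2 by rewrite divr_gt0.
  have [r0 hr0] := Hfa g gc gx0 gxN _ e20.
  have e3 : 0 < e / 2 / (D + 1) by rewrite divr_gt0 // ltr_wpDl.
  have : \forall n \near \oo, (r0 <= n)%N /\ `|a ^+ n| < e / 2 / (D + 1).
    near=> n; split; near: n; first exact: nbhs_infty_ge.
    apply: cvgr0_norm_lt e3; apply: cvg_expr; rewrite ger0_norm //.
  case/filter_ex => n [hn1 hn2].
  have k1 := hr0 n hn1 t (mem_set ht).
  have k2 := key n 1%N isT t ht.
  rewrite /Tcomp in k1.
  have -> : fa t - f t = - (foldr (fun k h => Top x N alpha f (fun r => L r f) k h) g
      (iota 1 n) t - fa t) + (foldr (fun k h => Top x N alpha f (fun r => L r f) k h) g
      (iota 1 n) t - f t) by rewrite opprB addrA subrK.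
  apply: le_trans (ler_normD _ _) _; rewrite normrN.
  have : a ^+ n * D <= e / 2.
    rewrite ger0_norm ?exprn_ge0 // in hn2.
    apply: le_trans (_ : a ^+ n * (D + 1) <= _).
      by rewrite ler_wpM2l ?exprn_ge0 // lerDl.
    by rewrite -ler_pdivlMr ?ltW // ltr_wpDl.
  move=> h3.
  have := lerD (ltW k1) k2.
  move=> /le_trans; apply.
  lra.
apply: supnorm_le => // t ht.
have := lerD (hfa t ht) (hS j t j0 ht).
move=> h /=.
have -> : fa t - L j f t = (fa t - f t) + (f t - L j f t) by rewrite addrA subrK.
apply: le_trans (ler_normD _ _) _; apply: le_trans h _.
by rewrite /B le_eqVlt; apply/orP; left; apply/eqP; field.
Unshelve. all: by end_near.
Qed.
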